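(* Let $G$ be a graph of order $n$ with adjacency eigenvalues $\lambda_1(G)\ge\cdots\ge\lambda_n(G)$ and negative inertia $\nu^-=\nu^-(G)$. Let $F$ be a clique partition of $G$ and let $t_i^F$ be the $i$th largest clique-degree of $G$ with respect to $F$. Then for $1\le i\le\nu^-$, $$\lambda_{n-i+1}(G)\ge -t_i^F.$$ Equality holds if $G$ is clique-regular with respect to $F$ and $\nu^-=n-|F|$.
   Context: All graphs are finite and simple. A clique partition of $G$ is a set $F$ of cliques (sets of pairwise adjacent vertices) such that every edge lies in exactly one clique of $F$. The clique-degree of a vertex is the number of cliques of $F$ containing it; $t_1^F\ge\cdots\ge t_n^F$ are the clique-degrees in non-increasing order. $G$ is clique-regular with respect to $F$ if all clique-degrees are equal. $\nu^-(G)$ is the number of negative adjacency eigenvalues. *)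

(* Defs.v *)
From mathcomp Require Import all_boot all_order all_algebra.
Set Implicit Arguments. Unset Strict Implicit. Unset Printing Implicit Defensive.
Import Order.TTheory GRing.Theory Num.Theory.
Local Open Scope ring_scope.

Definition simple_graph (n : nat) (e : rel 'I_n) : Prop :=
  (forall u v, e u v = e v u) /\ (forall u, ~~ e u u).

Definition adjmx (R : pzRingType) (n : nat) (e : rel 'I_n) : 'M[R]_n :=
  \matrix_(i, j) (e i j)%:R.

Definition is_clique (n : nat) (e : rel 'I_n) (C : {set 'I_n}) : Prop :=
  forall u v, u \in C -> v \in C -> u != v -> e u v.

Definition clique_partition (n : nat) (e : rel 'I_n) (F : {set {set 'I_n}}) : Prop :=
  (forall C, C \in F -> is_clique e C) /\
  (forall u v, e u v -> exists! C, [/\ C \in F, u \in C & v \in C]).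

Definition clique_deg (n : nat) (F : {set {set 'I_n}}) (v : 'I_n) : nat :=
  #|[set C in F | v \in C]|.

(* Clique-degrees in non-increasing order: t_i^F = nth 0 (clique_degs F) (i-1). *)
Definition clique_degs (n : nat) (F : {set {set 'I_n}}) : seq nat :=
  sort geq [seq clique_deg F v | v <- enum 'I_n].

Definition clique_regular (n : nat) (F : {set {set 'I_n}}) : Prop :=
  forall u v : 'I_n, clique_deg F u = clique_deg F v.

(* s is the list of eigenvalues of A (with multiplicity), in non-increasing
   order: lambda_k = nth 0 s (k-1). *)
Definition sorted_spectrum (R : numFieldType) (n : nat) (A : 'M[R]_n) (s : seq R) : Prop :=
  [/\ size s = n, char_poly A = \prod_(x <- s) ('X - x%:P) & sorted >=%R s].

Definition neg_inertia (R : numFieldType) (s : seq R) : nat := count (fun x => x < 0) s.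

(* Main.v *)
Require Import Defs.
From mathcomp Require Import all_boot all_order all_algebra.
From mathcomp Require Import sesquilinear spectral complex.
From mathcomp Require Import zify.
Import Order.TTheory GRing.Theory Num.Theory.
Set Implicit Arguments. Unset Strict Implicit. Unset Printing Implicit Defensive.
Local Open Scope ring_scope.

Local Open Scope sesquilinear_scope.

Lemma kernel_nz (K : fieldType) n p (M : 'M[K]_(n,p)) :
  (p < n)%N -> exists2 v : 'rV_n, v != 0 & v *m M = 0.
Proof.
move=> pn.
have : kermx M != 0.
  rewrite -mxrank_eq0 mxrank_ker -lt0n subn_gt0.
  exact: leq_ltn_trans (rank_leq_col M) pn.
case: (eqVneq (kermx M) 0) => // Kn0 _.
have [i Hi] : exists i, row i (kermx M) != 0.
  apply/existsP; apply: contraNT Kn0; rewrite negb_exists => /forallP H.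
  apply/eqP/row_matrixP => i; rewrite row0; exact/eqP/negPn/H.
exists (row i (kermx M)) => //.
by rewrite -row_mul mulmx_ker row0.
Qed.

Lemma kernel_cols (K : fieldType) n (cs : seq 'cV[K]_n) :
  (size cs < n)%N -> exists2 v : 'rV_n, v != 0 & forall c, c \in cs -> v *m c = 0.
Proof.
move=> Hs.
pose M := \matrix_(i < n, k < size cs) (nth 0 cs k) i 0.
have [v vn0 vM] := @kernel_nz K n (size cs) M Hs.
exists v => // c /(nthP 0) [k kl <-].
apply/matrixP => a b; rewrite !ord1.
have /matrixP /(_ 0 (Ordinal kl)) := vM.
rewrite !mxE => H; rewrite -[RHS]H. apply: eq_bigr => i _; rewrite /M !mxE.
by []. Qed.

Lemma tCM (C : numClosedFieldType) m n p (A : 'M[C]_(m,n)) (B : 'M[C]_(n,p)) :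
  (A *m B)^t* = B^t* *m A^t*.
Proof. by rewrite trmx_mul map_mxM. Qed.

Lemma spec_form (C : numClosedFieldType) n (P : 'M[C]_n) (d : 'rV[C]_n) (v : 'rV[C]_n) :
  P \is unitarymx ->
  (v *m (invmx P *m diag_mx d *m P) *m v^t*) 0 0 =
     \sum_j d 0 j * ((v *m P^t*) 0 j * ((v *m P^t*) 0 j)^*)
  /\ (v *m v^t*) 0 0 = \sum_j (v *m P^t*) 0 j * ((v *m P^t*) 0 j)^*.
Proof.
move=> Pu; have Pi := invmx_unitary Pu; have PU := unitarymx_unit Pu.
set w := v *m P^t*.
have wt : w^t* = P *m v^t* by rewrite /w tCM trmxCK.
have E : forall D : 'M[C]_n, v *m (invmx P *m D *m P) *m v^t* = w *m D *m w^t*.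
  by move=> D; rewrite wt Pi !mulmxA.
split.
  rewrite E mul_mx_diag mxE; apply: eq_bigr => j _.
  by rewrite !mxE mulrAC mulrC.
have -> : v *m v^t* = v *m (invmx P *m 1%:M *m P) *m v^t*.
  by rewrite mulmx1 mulVmx // mulmx1.
rewrite E mulmx1 mxE; apply: eq_bigr => j _.
by rewrite !mxE.
Qed.

Lemma cnt_eq n (e : rel 'I_n) F : simple_graph e -> clique_partition e F ->
  forall u u', #|[set K in F | (u \in K) && (u' \in K)]| =
     if u == u' then clique_deg F u else nat_of_bool (e u u').
Proof.
move=> [esym eirr] [Fcl Fpart] u u'.
case: eqVneq => [<-|neq].
  by rewrite /clique_deg; apply: eq_card => K; rewrite !inE andbb.
case Euu: (e u u').
  have [K0 [[K0F uK0 u'K0] K0u]] := Fpart _ _ Euu.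
  transitivity #|[set K0]|; last by rewrite cards1.
  apply: eq_card => K; rewrite !inE.
  apply/idP/eqP => [/andP[KF /andP[uK u'K]]|->]; last by rewrite K0F uK0 u'K0.
  by symmetry; apply: K0u.
apply/eqP; rewrite cards_eq0; apply/eqP/setP => K; rewrite !inE.
apply/negP => /andP[KF /andP[uK u'K]].
by have := Fcl K KF u u' uK u'K neq; rewrite Euu.
Qed.

Lemma card_sumr (C : pzRingType) (T : finType) (F : {set T}) (P : pred T) :
  (#|[set K in F | P K]|)%:R = \sum_(K in F) (P K)%:R :> C.
Proof.
rewrite -sum1_card natr_sum [RHS]big_mkcond [LHS]big_mkcond /=.
apply: eq_bigr => K _; rewrite !inE; case: (K \in F); case: (P K) => //.
Qed.

Lemma graph_form (C : numClosedFieldType) n (e : rel 'I_n) F (x : 'I_n -> C) :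
  simple_graph e -> clique_partition e F ->
  \sum_u \sum_u' x u * adjmx C e u u' * (x u')^* =
  \sum_(K in F) (\sum_u x u * (u \in K)%:R) * (\sum_u x u * (u \in K)%:R)^*
  - \sum_u (clique_deg F u)%:R * (x u * (x u)^*).
Proof.
move=> Hs Hp.
have Ae : forall u u', adjmx C e u u' =
   \sum_(K in F) (u \in K)%:R * (u' \in K)%:R - (u == u')%:R * (clique_deg F u)%:R.
  move=> u u'; rewrite mxE.
  have := card_sumr C F (fun K => (u \in K) && (u' \in K)).
  rewrite (cnt_eq Hs Hp).
  have -> : \sum_(K in F) ((u \in K) && (u' \in K))%:R =
            \sum_(K in F) (u \in K)%:R * (u' \in K)%:R :> C.
    by apply: eq_bigr => K _; case: (u \in K); case: (u' \in K);
       rewrite /= ?mul1r ?mul0r.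
  case: eqVneq => [<-|_] <-.
    by case: Hs => _ /(_ u) /negbTE ->; rewrite mul1r subrr.
  by rewrite mul0r subr0.
have E1 : forall K : {set 'I_n}, (\sum_u x u * (u \in K)%:R)^* = \sum_u (x u)^* * (u \in K)%:R.
  by move=> K; rewrite raddf_sum; apply: eq_bigr => u _; rewrite /= rmorphM /= conjC_nat.
have R1 : \sum_(K in F) (\sum_u x u * (u \in K)%:R) * (\sum_u x u * (u \in K)%:R)^*
   = \sum_u \sum_u' \sum_(K in F) (x u * (u \in K)%:R) * ((x u')^* * (u' \in K)%:R).
  under eq_bigr do rewrite E1 big_distrl /=.
  under eq_bigr do under eq_bigr do rewrite big_distrr /=.
  rewrite (exchange_big_dep xpredT) //=.
  apply: eq_bigr => u _; rewrite (exchange_big_dep xpredT) //=; apply: eq_bigr => u' _; apply: eq_bigl => K; by rewrite !andbT.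
rewrite R1.
rewrite -sumrB; apply: eq_bigr => u _.
under eq_bigr do rewrite Ae mulrBr mulrBl big_distrr big_distrl /=.
rewrite sumrB; congr (_ - _).
  apply: eq_bigr => u' _; apply: eq_bigr => K _. by rewrite !mulrA [RHS]mulrAC.
rewrite (bigD1 u) //= big1 => [|u' /negbTE]; last by rewrite eq_sym => ->; rewrite mul0r mulr0 mul0r.
by rewrite eqxx mul1r addr0 mulrCA mulrA.
Qed.

Lemma card_count (T : finType) (P : pred T) : #|[set j | P j]| = count P (enum T).
Proof. rewrite cardsE cardE /enum_mem size_filter /= -enumT (@eq_filter _ _ predT) ?filter_predT //. Qed.

Lemma count_tail T (P : pred T) (l : seq T) x0 m :
  (forall k, (m <= k < size l)%N -> P (nth x0 l k)) -> (size l - m <= count P l)%N.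
Proof.
move=> H; rewrite -{2}(cat_take_drop m l) count_cat.
have : all P (drop m l).
  apply/(all_nthP x0) => k; rewrite size_drop nth_drop => klt.
  apply: H; rewrite leq_addr /=; by rewrite -ltn_subRL.
by rewrite all_count size_drop => /eqP ->; rewrite leq_addl.
Qed.

Lemma count_head T (P : pred T) (l : seq T) x0 m :
  (m <= size l)%N -> (forall k, (k < m)%N -> P (nth x0 l k)) -> (m <= count P l)%N.
Proof.
move=> ml H; rewrite -(cat_take_drop m l) count_cat.
have : all P (take m l).
  apply/(all_nthP x0) => k; rewrite size_takel // => km; rewrite nth_take //; exact: H.
by rewrite all_count size_takel // => /eqP ->; rewrite leq_addr.
Qed.

Lemma char_poly_sim (K : comNzRingType) n (Q D P : 'M[K]_n) :
  Q *m P = 1%:M -> char_poly (Q *m D *m P) = char_poly D.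
Proof.
move=> QP; rewrite /char_poly /char_poly_mx.
have QP' : map_mx polyC Q *m map_mx polyC P = 1%:M by rewrite -map_mxM QP map_mx1.
have -> : 'X%:M - map_mx polyC (Q *m D *m P) =
   map_mx polyC Q *m ('X%:M - map_mx polyC D) *m map_mx polyC P.
  rewrite !map_mxM mulmxBr mulmxBl mul_mx_scalar -scalemxAl QP' scalemx1 //.
rewrite !det_mulmx mulrAC -det_mulmx QP' det1 mul1r //.
Qed.

Lemma quad (C : numClosedFieldType) n (e : rel 'I_n) F (P : 'M[C]_n) d (v : 'rV[C]_n) (c : C) :
  simple_graph e -> clique_partition e F -> P \is unitarymx ->
  adjmx C e = invmx P *m diag_mx d *m P ->
  \sum_(K in F) (\sum_u v 0 u * (u \in K)%:R) * (\sum_u v 0 u * (u \in K)%:R)^*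
   + \sum_u (c - (clique_deg F u)%:R) * (v 0 u * (v 0 u)^*)
  = \sum_j (d 0 j + c) * ((v *m P^t*) 0 j * ((v *m P^t*) 0 j)^*).
Proof.
move=> Hs Hp Pu HA.
have [S1 S2] := spec_form d v Pu; rewrite -HA in S1.
have G := graph_form (fun u => v 0 u) Hs Hp.
have E : (v *m adjmx C e *m v^t*) 0 0 =
    \sum_u \sum_u' v 0 u * adjmx C e u u' * (v 0 u')^*.
  rewrite mxE exchange_big; apply: eq_bigr => u' _.
  by rewrite !mxE big_distrl; apply: eq_bigr => u _; rewrite !mxE.
have E2 : (v *m v^t*) 0 0 = \sum_u v 0 u * (v 0 u)^*.
  by rewrite mxE; apply: eq_bigr => u _; rewrite !mxE.
under [X in _ + X]eq_bigr do rewrite mulrBl.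
rewrite sumrB -mulr_sumr -E2 S2 addrCA addrC -G -E S1 mulr_sumr -big_split /=.
by apply: eq_bigr => j _; rewrite mulrDl.
Qed.

Lemma key_exists (C : numClosedFieldType) n (P : 'M[C]_n) (cs : seq 'cV[C]_n) (J : {set 'I_n}) :
  (#|~: J| + size cs < n)%N ->
  exists2 v : 'rV_n, v != 0 &
    (forall c, c \in cs -> v *m c = 0) /\ (forall j, j \notin J -> (v *m P^t*) 0 j = 0).
Proof.
move=> Hs.
have [|v vn0 Hv] := @kernel_cols _ n ([seq col j (P^t*) | j <- enum (~: J)] ++ cs).
  by rewrite size_cat size_map -cardE.
exists v => //; split=> [c cin|j jJ]; first by apply: Hv; rewrite mem_cat cin orbT.
have jin : col j (P^t*) \in [seq col j (P^t*) | j <- enum (~: J)] ++ cs.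
  by rewrite mem_cat; apply/orP; left; apply: map_f; rewrite mem_enum inE.
have /matrixP /(_ 0 0) := Hv _ jin.
rewrite !mxE => H; rewrite -[RHS]H; apply: eq_bigr => i _; by rewrite !mxE.
Qed.

Lemma sum_lt0 (C : numDomainType) (I : finType) (a b : I -> C) j0 :
  (forall j, b j = 0 \/ a j < 0) -> (forall j, 0 <= b j) -> b j0 != 0 ->
  \sum_j a j * b j < 0.
Proof.
move=> H bge bj0.
have aj0 : a j0 < 0 by case: (H j0) => // /eqP; rewrite (negbTE bj0).
rewrite (bigD1 j0) //=.
have h1 : a j0 * b j0 < 0 by rewrite nmulr_rlt0 // lt_def bj0 bge.
have h2 : \sum_(j | j != j0) a j * b j <= 0.
  apply: sumr_le0 => j _; case: (H j) => [->|/ltW a0]; first by rewrite mulr0.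
  exact: mulr_le0_ge0.
by have := ltr_leD h1 h2; rewrite addr0.
Qed.

Lemma sum_gt0 (C : numDomainType) (I : finType) (a b : I -> C) j0 :
  (forall j, b j = 0 \/ 0 < a j) -> (forall j, 0 <= b j) -> b j0 != 0 ->
  0 < \sum_j a j * b j.
Proof.
move=> H bge bj0.
rewrite -oppr_lt0 -sumrN.
under eq_bigr do rewrite -mulNr.
apply: (@sum_lt0 _ _ (fun j => - a j) b j0) => // j.
by case: (H j) => [->|a0]; [left|right; rewrite oppr_lt0].
Qed.

Lemma eq_contra1 (C : numDomainType) (a b : C) : 0 <= a -> b < 0 -> a = b -> False.
Proof. by move=> a0 b0 ab; move: b0; rewrite -ab => b0; move: (le_lt_trans a0 b0); rewrite ltxx. Qed.

Lemma eq_contra2 (C : numDomainType) (a b : C) : a = 0 -> 0 < b -> a = b -> False.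
Proof. by move=> a0 b0 ab; move: b0; rewrite -ab a0 ltxx. Qed.

Local Close Scope sesquilinear_scope.

Theorem mainTheorem5 (R : rcfType) (n : nat) (e : rel 'I_n) (F : {set {set 'I_n}})
    (s : seq R) :
  simple_graph e -> clique_partition e F ->
  sorted_spectrum (adjmx R e) s ->
  (forall i : nat, (1 <= i <= neg_inertia s)%N ->
     nth 0 s (n - i) >= - ((nth 0%N (clique_degs F) i.-1)%:R)) /\
  (clique_regular F -> (neg_inertia s + #|F|)%N = n ->
   forall i : nat, (1 <= i <= neg_inertia s)%N ->
     nth 0 s (n - i) = - ((nth 0%N (clique_degs F) i.-1)%:R)).
Proof.
move=> Hs Hp [ssz Hchar Hsort].
pose A := adjmx (complex R) e.
have AE : A = map_mx (real_complex R) (adjmx R e).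
  by apply/matrixP => i j; rewrite !mxE rmorph_nat.
have Achar : char_poly A = \prod_(x <- s) ('X - (real_complex R x)%:P).
  rewrite AE -map_char_poly Hchar rmorph_prod.
  by apply: eq_bigr => x _; rewrite /= map_polyXsubC.
have Anorm : A \is normalmx.
  have At : (A^t*)%sesqui = A.
    by apply/matrixP => i j; rewrite !mxE conjC_nat (proj1 Hs).
  by apply/normalmxP; rewrite At.
set P := spectralmx A; set d := spectral_diag A.
have HA : A = invmx P *m diag_mx d *m P by apply/orthomx_spectralP.
have Pu : P \is unitarymx := spectral_unitarymx A.
have PU : P \in unitmx := spectral_unit A.
have Dchar : char_poly A = \prod_(j < n) ('X - (d 0 j)%:P).
  rewrite HA char_poly_sim ?mulVmx // char_poly_trig ?diag_mx_is_trig //.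
  by apply: eq_bigr => j _; rewrite mxE eqxx mulr1n.
have Hperm : perm_eq (map (real_complex R) s) [seq d 0 j | j <- enum 'I_n].
  apply: prod_XsubC_eq; rewrite !big_map -Achar Dchar. by rewrite -enumT big_enum.
have Hcnt : forall (Q : pred R) (Q' : pred (complex R)),
    (forall x, Q' (real_complex R x) = Q x) -> #|[set j | Q' (d 0 j)]| = count Q s.
  move=> Q Q' HQ; rewrite card_count -(count_map (fun j => d 0 j) Q').
  rewrite -(permP Hperm) count_map; apply: eq_count => x /=; exact: HQ.
have PtP : (P^t*)%sesqui *m P = 1%:M by rewrite -invmx_unitary // mulVmx.
have wnz : forall v : 'rV[complex R]_n, v != 0 ->
    exists j, (v *m (P^t*)%sesqui) 0 j != 0.
  move=> v vn0.
  have wn0 : v *m (P^t*)%sesqui != 0.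
    apply: contraNneq vn0 => H.
    by rewrite -[v]mulmx1 -PtP mulmxA H mul0mx.
  apply/existsP; apply: contraNT wn0 => /existsPn H.
  apply/eqP/rowP => j; rewrite [RHS]mxE; apply/eqP; exact: negbNE (H j).
have mn : (neg_inertia s <= n)%N by rewrite /neg_inertia -ssz count_size.
have sizeL : size (clique_degs F) = n.
  by rewrite /clique_degs size_sort size_map size_enum_ord.
have sortedL : sorted geq (clique_degs F).
  by apply: sort_sorted => a b; exact: leq_total.
have geq_tr : transitive geq by move=> b a c h1 h2; exact: leq_trans h2 h1.
have ge_tr : transitive (>=%R : rel R) by move=> b a c h1 h2; exact: le_trans h2 h1.
have snth : forall k l, (k <= l < n)%N -> nth 0 s l <= nth 0 s k.
  move=> k l /andP[kl ln].
  have := sorted_leq_nth ge_tr (@lexx _ R) 0 Hsort; apply => //; rewrite inE ssz //.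
  exact: leq_ltn_trans kl ln.
have Lnth : forall k l, (k <= l < n)%N ->
    (nth 0 (clique_degs F) l <= nth 0 (clique_degs F) k)%N.
  move=> k l /andP[kl ln].
  have := sorted_leq_nth geq_tr leqnn 0 sortedL; apply => //; rewrite inE sizeL //.
  exact: leq_ltn_trans kl ln.
have cntL : forall Q : pred nat,
    count Q (clique_degs F) = #|[set u | Q (clique_deg F u)]|.
  move=> Q; rewrite card_count -(count_map (clique_deg F) Q).
  by apply/permP; rewrite perm_sort.
have colS : forall (v : 'rV[complex R]_n) u, (v *m col u 1%:M) 0 0 = v 0 u.
  by move=> v u; rewrite colE mul1mx -colE mxE.
have P1 : forall i : nat, (1 <= i <= neg_inertia s)%N ->
     nth 0 s (n - i) >= - ((nth 0%N (clique_degs F) i.-1)%:R).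
  move=> i /andP[i1 im].
  have iN : (i <= n)%N := leq_trans im mn.
  set c := nth 0%N (clique_degs F) i.-1.
  rewrite leNgt; apply/negP => Hlt.
  pose J := [set j | d 0 j < - (c%:R)].
  have cJ : (i <= #|J|)%N.
    rewrite (@Hcnt (fun x => x < - (c%:R)) (fun z => z < - (c%:R))); last first.
      by move=> x; rewrite /= -(rmorph_nat (real_complex R)) -rmorphN ltcR.
    have := @count_tail _ (fun x => x < - (c%:R)) s 0 (n - i).
    rewrite ssz subKn //; apply => k /andP[kl kn].
    by apply: le_lt_trans Hlt; apply: snth; rewrite kl kn.
  pose S := [set u | (clique_deg F u <= c)%N].
  have cS : (n - i.-1 <= #|S|)%N.
    have := @count_tail _ (fun k => (k <= c)%N) (clique_degs F) 0%N i.-1; rewrite sizeL cntL; apply => k /andP[kl kn].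
    by rewrite /c; apply: Lnth; rewrite kl kn.
  pose cs := [seq col u (1%:M : 'M[complex R]_n) | u <- enum (~: S)].
  have csz : size cs = #|~: S| by rewrite size_map -cardE.
  have cJc := cardsC J; have cSc := cardsC S; rewrite card_ord in cJc cSc.
  have [|v vn0 [Hv1 Hv2]] := @key_exists _ n P cs J.
    rewrite csz; rewrite -subn1 in cS; move: cJ cS cJc cSc i1 iN; move: (#|J|) (#|~: J|) (#|S|) (#|~: S|) => a b a2 b2; lia.
  have vS : forall u, u \notin S -> v 0 u = 0.
    move=> u uS; rewrite -colS Hv1 ?mxE //.
    by apply: map_f; rewrite mem_enum inE.
  have := @quad (complex R) n e F P d v (c%:R) Hs Hp Pu HA.
  have [j0 hj0] := wnz v vn0.
  apply: eq_contra1.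
    apply: addr_ge0; first by apply: sumr_ge0 => K _; exact: mul_conjC_ge0.
    apply: sumr_ge0 => u _; case: (boolP (u \in S)) => uS.
      apply: mulr_ge0; last exact: mul_conjC_ge0.
      by rewrite subr_ge0 ler_nat; move: uS; rewrite inE.
    by rewrite vS // mul0r mulr0.
  apply: (sum_lt0 (j0 := j0)).
  - move=> j; case: (boolP (j \in J)) => jJ.
      by right; move: jJ; rewrite inE -(ltrD2r (c%:R)) addNr.
    by left; rewrite Hv2 // mul0r.
  - by move=> j; exact: mul_conjC_ge0.
  - by rewrite mul_conjC_eq0.
split => // Hreg Hsum i /andP[i1 im].
have iN : (i <= n)%N := leq_trans im mn.
have n0 : (0 < n)%N := leq_trans i1 iN.
pose u0 : 'I_n := Ordinal n0.
set t := clique_deg F u0.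
have Lc : nth 0%N (clique_degs F) i.-1 = t.
  have : nth 0%N (clique_degs F) i.-1 \in clique_degs F.
    by apply: mem_nth; rewrite sizeL prednK // (leq_trans (leqnn i) iN).
  rewrite /clique_degs mem_sort => /mapP [u _ ->]; exact: Hreg.
apply/eqP; rewrite eq_le P1 ?i1 ?im // andbT Lc.
rewrite leNgt; apply/negP => Hgt.
pose J := [set j | - (t%:R) < d 0 j].
have cJ : ((n - i).+1 <= #|J|)%N.
  rewrite (@Hcnt (fun x => - (t%:R) < x) (fun z => - (t%:R) < z)); last first.
    by move=> x; rewrite /= -(rmorph_nat (real_complex R)) -rmorphN ltcR.
  apply: count_head; first by rewrite ssz; lia.
  move=> k kl; apply: lt_le_trans Hgt _; apply: snth; rewrite -ltnS kl /=; lia.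
pose cs := [seq (\col_(u < n) ((u \in K)%:R : complex R)) | K : {set 'I_n} <- enum F].
have csz : size cs = #|F| by rewrite size_map -cardE.
have cJc := cardsC J; rewrite card_ord in cJc.
have [|v vn0 [Hv1 Hv2]] := @key_exists _ n P cs J.
  rewrite csz; move: cJ cJc Hsum i1 im iN; move: (#|J|) (#|~: J|) => a b; lia.
have vF : forall K, K \in F -> \sum_u v 0 u * (u \in K)%:R = 0.
  move=> K KF.
  have Kin : (\col_(u < n) ((u \in K)%:R : complex R)) \in cs.
    by apply: map_f; rewrite mem_enum.
  have /matrixP /(_ 0 0) := Hv1 _ Kin.
  rewrite !mxE => H; rewrite -[RHS]H; apply: eq_bigr => u _; by rewrite !mxE.
have := @quad (complex R) n e F P d v (t%:R) Hs Hp Pu HA.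
have [j0 hj0] := wnz v vn0.
apply: eq_contra2.
  rewrite big1 ?add0r; last by move=> K KF; rewrite vF // mul0r.
  by rewrite big1 // => u _; rewrite /t (Hreg u u0) subrr mul0r.
apply: (sum_gt0 (j0 := j0)).
- move=> j; case: (boolP (j \in J)) => jJ.
    by right; move: jJ; rewrite inE -(ltrD2r (t%:R)) addNr.
  by left; rewrite Hv2 // mul0r.
- by move=> j; exact: mul_conjC_ge0.
- by rewrite mul_conjC_eq0.
Qed.
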